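(* Let $\text{rank}[\mathbf{A}_{12}] = q$. Then the system $$\dot{\hat{\mathbf{z}}}_2(t) = [\mathbf{A}_{22} - \mathbf{L}\mathbf{A}_{12}]\hat{\mathbf{z}}_2(t) + \mathbf{L}\mathbf{y}_1(t) + \mathbf{D}\mathbf{u}_1(t) + \mathbf{F}\boldsymbol{\omega}(t), \qquad \dot{\boldsymbol{\omega}}(t) = \mathbf{G}[\mathbf{y}_1(t) - \mathbf{A}_{12}\hat{\mathbf{z}}_2(t)]$$ with $\text{rank}[\mathbf{G}] = k$ and $q \geq k$ is a reduced order proportional-integral observer for the system $\dot{\mathbf{x}}(t) = \mathbf{A}\mathbf{x}(t) + \mathbf{B}\mathbf{u}(t)$, $\mathbf{y}(t) = \mathbf{C}\mathbf{x}(t)$ if and only if the following condition holds: (a) The pair $(\mathbf{A}, \mathbf{C})$ is detectable.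
   Context: Consider the continuous-time LTI system $\dot{\mathbf{x}}(t) = \mathbf{A}\mathbf{x}(t) + \mathbf{B}\mathbf{u}(t)$, $\mathbf{y}(t) = \mathbf{C}\mathbf{x}(t)$ with real matrices $\mathbf{A}$ ($n\times n$), $\mathbf{B}$ ($n\times m$), $\mathbf{C}$ ($p\times n$), $\text{rank}[\mathbf{C}]=p$. Let $\mathbf{T}$ be a nonsingular real $n\times n$ matrix with $\mathbf{C}\mathbf{T}=[\mathbf{I}_p,\mathbf{0}]$, and write $\mathbf{T}^{-1}\mathbf{A}\mathbf{T} = \begin{bmatrix}\mathbf{A}_{11} & \mathbf{A}_{12}\\ \mathbf{A}_{21} & \mathbf{A}_{22}\end{bmatrix}$, $\mathbf{T}^{-1}\mathbf{B} = \begin{bmatrix}\mathbf{G}_1\\ \mathbf{G}_2\end{bmatrix}$, where $\mathbf{A}_{12}$ is $p\times(n-p)$ and $\mathbf{A}_{22}$ is $(n-p)\times(n-p)$; $\mathbf{z}=\mathbf{T}^{-1}\mathbf{x} = [\mathbf{z}_1;\mathbf{z}_2]$ with $\mathbf{z}_1=\mathbf{y}$ and $\mathbf{z}_2$ of size $(n-p)$. Define $\mathbf{u}_1(t)=[\mathbf{y}(t);\mathbf{u}(t)]$, $\mathbf{y}_1(t)=\dot{\mathbf{y}}(t)-\mathbf{A}_{11}\mathbf{y}(t)-\mathbf{G}_1\mathbf{u}(t)$, $\mathbf{D}=[\mathbf{A}_{21},\mathbf{G}_2]$, so that $\dot{\mathbf{z}}_2 = \mathbf{A}_{22}\mathbf{z}_2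 + \mathbf{D}\mathbf{u}_1$, $\mathbf{y}_1=\mathbf{A}_{12}\mathbf{z}_2$. In the observer, $\hat{\mathbf{z}}_2(t)$ has size $(n-p)$, $\boldsymbol{\omega}(t)$ has size $k$, and $\mathbf{L}$, $\mathbf{F}$, $\mathbf{G}$ are real matrices of size $(n-p)\times p$, $(n-p)\times k$, $k\times p$. The observer is called a reduced order proportional-integral observer if for arbitrary initial conditions and any input, $\hat{\mathbf{z}}_2(t)-\mathbf{z}_2(t)\to\mathbf{0}$ and $\boldsymbol{\omega}(t)\to\mathbf{0}$ as $t\to\infty$; equivalently, the matrix $\begin{bmatrix}\mathbf{A}_{22}-\mathbf{L}\mathbf{A}_{12} & \mathbf{F}\\ -\mathbf{G}\mathbf{A}_{12} & \mathbf{0}\end{bmatrix}$ is Hurwitz stable (all eigenvalues have negative real parts). The pair $(\mathbf{A},\mathbf{C})$ is detectable iff $\text{rank}\begin{bmatrix}\mathbf{C}\\ s\mathbf{I}_n-\mathbf{A}\end{bmatrix}=n$ for all complex $s$ with $\mathrm{Re}(s)\ge 0$. *)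

(* Defs.v *)
(* real matrices over an arbitrary real closed field R,
   complexified to R[i] (mathcomp-real-closed) for eigenvalues / PBH test. *)
From HB Require Import structures.
From mathcomp Require Import all_boot all_order all_algebra.
From mathcomp Require Import complex.
Set Implicit Arguments. Unset Strict Implicit. Unset Printing Implicit Defensive.
Import Order.TTheory GRing.Theory Num.Theory.
Local Open Scope ring_scope.

Definition cmx (R : rcfType) (m n : nat) (M : 'M[R]_(m, n)) : 'M[R[i]]_(m, n) :=
  map_mx (fun x : R => (x%:C)%C) M.

Definition hurwitz (R : rcfType) (n : nat) (M : 'M[R]_n) : Prop :=
  forall s : R[i], eigenvalue (cmx M) s -> complex.Re s < 0.

(* detectability of (A, C) via the rank (PBH) condition of the paper *)
Definition detectable (R : rcfType) (n p : nat) (A : 'M[R]_n) (C : 'M[R]_(p, n))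
  : Prop :=
  forall s : R[i], 0 <= complex.Re s ->
    \rank (col_mx (cmx C) (s%:M - cmx A)) = n.

(* the error-dynamics matrix of the reduced order PI observer *)
Definition pi_obs_matrix (R : rcfType) (p r k : nat)
  (A22 : 'M[R]_r) (A12 : 'M[R]_(p, r))
  (L : 'M[R]_(r, p)) (F : 'M[R]_(r, k)) (G : 'M[R]_(k, p)) : 'M[R]_(r + k) :=
  block_mx (A22 - L *m A12) F (- (G *m A12)) 0.

(* reduced order PI observer: error matrix is Hurwitz (equivalent
   characterization given in the paper's definition) *)
Definition is_reduced_PI_observer (R : rcfType) (p r k : nat)
  (A22 : 'M[R]_r) (A12 : 'M[R]_(p, r))
  (L : 'M[R]_(r, p)) (F : 'M[R]_(r, k)) (G : 'M[R]_(k, p)) : Prop :=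
  hurwitz (pi_obs_matrix A22 A12 L F G).

(* Main.v *)
Require Import Defs.
From HB Require Import structures.
From mathcomp Require Import all_boot all_order all_algebra.
From mathcomp Require Import complex.
From mathcomp Require Import ring lra zify.
From Stdlib Require Classical_Prop.
Set Implicit Arguments. Unset Strict Implicit. Unset Printing Implicit Defensive.
Import Order.TTheory GRing.Theory Num.Theory.
Local Open Scope ring_scope.
Local Open Scope complex_scope. Local Open Scope ring_scope.
Lemma brauer (F : fieldType) n d (A : 'M[F]_n) (Lam : 'M[F]_d) (W : 'M[F]_(d,n))
   (U : 'M[F]_(n,d)) :
  W *m A = Lam *m W ->
  char_poly Lam * char_poly (A - U *m W) = char_poly A * char_poly (Lam - W *m U).
Proof.
move=> WA.
pose P m l (X : 'M[F]_(m,l)) := map_mx (@polyC F) X.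
set M := char_poly_mx A; set N := char_poly_mx Lam.
have eM : char_poly_mx (A - U *m W) = M + P _ _ U *m P _ _ W.
  by rewrite /M /char_poly_mx /P map_mxB map_mxM opprB addrA addrAC.
have eN : char_poly_mx (Lam - W *m U) = N + P _ _ W *m P _ _ U.
  by rewrite /N /char_poly_mx /P map_mxB map_mxM opprB addrA addrAC.
have WM : P _ _ W *m M = N *m P _ _ W.
  rewrite /M /N /char_poly_mx !mulmxBr !mulmxBl mul_mx_scalar mul_scalar_mx.
  by rewrite /P -!map_mxM WA.
pose Y := block_mx M (- P _ _ U) (P _ _ W) 1%:M.
have E1 : Y = block_mx 1%:M (- P _ _ U) 0 1%:M *m block_mx (M + P _ _ U *m P _ _ W) 0 (P _ _ W) 1%:M.
  rewrite mulmx_block !mul1mx !mul0mx !mulmx1 !add0r ?addr0.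
  by rewrite mulNmx addrK.
have E2 : block_mx 1%:M 0 (- P _ _ W) N *m Y = block_mx M (- P _ _ U) 0 (N + P _ _ W *m P _ _ U).
  rewrite mulmx_block !mul1mx !mul0mx !mulmx1 !addr0 mulNmx WM addNr.
  by rewrite mulNmx mulmxN opprK addrC.
have := congr1 determinant E2; rewrite det_mulmx det_lblock det_ublock det1 mul1r.
rewrite E1 det_mulmx det_ublock det_lblock !det1 !mul1r mulr1 => H.
by rewrite /char_poly eM eN.
Qed.
Section C.
Variable R : rcfType.
Local Notation toC := (real_complex R).
Lemma cmxE m n (M : 'M[R]_(m,n)) : cmx M = map_mx toC M.
Proof. by []. Qed.
Lemma cmxM m n l (A : 'M[R]_(m,n)) (B : 'M[R]_(n,l)) : cmx (A *m B) = cmx A *m cmx B.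
Proof. by rewrite !cmxE map_mxM. Qed.

Lemma Re_pair (p q : R) : complex.Re (p%:C + 'i%C * q%:C) = p.
Proof. by rewrite /=; simpc. Qed.
Lemma Im_pair (p q : R) : complex.Im (p%:C + 'i%C * q%:C) = q.
Proof. by rewrite /=; simpc. Qed.
Lemma mul_pair (a b p q : R) : (a%:C + 'i%C * b%:C) * (p%:C + 'i%C * q%:C) =
   (a * p - b * q)%:C + 'i%C * (b * p + a * q)%:C.
Proof. rewrite /=; simpc. apply/eqP; rewrite eq_complex /=; apply/andP; split; apply/eqP; ring. Qed.

Definition cpair m n (P Q : 'M[R]_(m,n)) : 'M[R[i]]_(m,n) := cmx P + 'i%C *: cmx Q.
Lemma cpairE m n (P Q : 'M[R]_(m,n)) i j : cpair P Q i j = (P i j)%:C + 'i%C * (Q i j)%:C.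
Proof. by rewrite !mxE. Qed.
Lemma cpair_inj m n (P Q P' Q' : 'M[R]_(m,n)) : cpair P Q = cpair P' Q' -> P = P' /\ Q = Q'.
Proof.
move=> /matrixP E; split; apply/matrixP => i j; have := E i j; rewrite !cpairE.
  by move=> /(congr1 (@complex.Re R)); rewrite !Re_pair.
by move=> /(congr1 (@complex.Im R)); rewrite !Im_pair.
Qed.
Lemma cpair_decomp m n (X : 'M[R[i]]_(m,n)) : X = cpair (map_mx (@complex.Re R) X) (map_mx (@complex.Im R) X).
Proof. by apply/matrixP => i j; rewrite cpairE !mxE -complexE. Qed.
Lemma cpair0 m n : cpair (0 : 'M[R]_(m,n)) 0 = 0.
Proof. by apply/matrixP => i j; rewrite cpairE !mxE /=; simpc. Qed.
Lemma cpair_eq0 m n (P Q : 'M[R]_(m,n)) : cpair P Q = 0 -> P = 0 /\ Q = 0.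
Proof. by rewrite -cpair0 => /cpair_inj. Qed.
Lemma cpair_mulr m n l (P Q : 'M[R]_(m,n)) (Y : 'M[R]_(n,l)) :
  cpair P Q *m cmx Y = cpair (P *m Y) (Q *m Y).
Proof. by rewrite /cpair mulmxDl -scalemxAl !cmxM. Qed.
Lemma cpair_scale m n (a b : R) (P Q : 'M[R]_(m,n)) :
  (a%:C + 'i%C * b%:C) *: cpair P Q = cpair (a *: P - b *: Q) (b *: P + a *: Q).
Proof. by apply/matrixP => i j; rewrite mxE !cpairE mul_pair !mxE. Qed.
Lemma det2 (F : comNzRingType) (x y z w : F) :
  \det (block_mx x%:M y%:M z%:M w%:M : 'M_(1+1)) = x * w - y * z.
Proof.
rewrite (expand_det_row _ (lshift 1 0)) big_split_ord !big_ord1 /cofactor !det_mx11.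
rewrite !block_mxEul !block_mxEur.
have e1 : lift (lshift 1 (0 : 'I_1)) (0 : 'I_1) = rshift 1 (0 : 'I_1) by apply: val_inj.
have e2 : lift (rshift 1 (0 : 'I_1)) (0 : 'I_1) = lshift 1 (0 : 'I_1) by apply: val_inj.
have s1 : split (rshift 1 (0 : 'I_1)) = inr 0 := unsplitK (inr 0).
have s2 : split (lshift 1 (0 : 'I_1)) = inl 0 := unsplitK (inl 0).
rewrite !mxE e1 e2 !s1 ?s2 !mxE ?s1 ?s2 ?mxE /= !mulr1n.
by rewrite add0n expr0 expr1 mul1r; ring.
Qed.
Lemma char2 (F : comNzRingType) (p q r t : F) :
  char_poly (block_mx p%:M q%:M r%:M t%:M : 'M_(1+1)) = ('X - p%:P) * ('X - t%:P) - (q * r)%:P.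
Proof.
rewrite /char_poly /char_poly_mx map_block_mx !map_scalar_mx (scalar_mx_block 1 1).
rewrite opp_block_mx add_block_mx -!raddfN -!raddfD /= !add0r det2 !polyCN polyCM; ring.
Qed.
Lemma char1 (F : comNzRingType) (p : F) : char_poly (p%:M : 'M_1) = 'X - p%:P.
Proof. by rewrite /char_poly /char_poly_mx det_mx11 !mxE /= mulr1n. Qed.
Lemma char_poly_trmx (F : comNzRingType) n (A : 'M[F]_n) : char_poly A^T = char_poly A.
Proof. by rewrite /char_poly /char_poly_mx -det_tr linearB /= tr_scalar_mx ?map_trmx ?trmxK. Qed.
Lemma eigenvalue_tr (F : fieldType) n (A : 'M[F]_n) a : eigenvalue A^T a = eigenvalue A a.
Proof. by rewrite !eigenvalue_root_char char_poly_trmx. Qed.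

Lemma row_delta m (x : 'rV[R]_m) j : x *m delta_mx j 0 = (x 0 j)%:M :> 'M_1.
Proof. by apply/matrixP => i k; rewrite !ord1 -colE !mxE /= mulr1n. Qed.

Lemma row_nz m (x : 'rV[R]_m) : x != 0 -> exists j, x 0 j != 0.
Proof. by case/matrix0Pn => i [j]; rewrite ord1 => ?; exists j. Qed.

Lemma step_real n m (A : 'M[R]_n) (B : 'M[R]_(n,m)) (a : R) (y : 'rV[R]_n) :
  y *m A = a *: y -> y *m B != 0 -> exists K : 'M[R]_(m,n),
   ('X - a%:P) * char_poly (A - B *m K) = char_poly A * ('X + 1).
Proof.
move=> yA /row_nz [j gj]; set g := (y *m B) 0 j in gj.
pose K' : 'M[R]_(m,1) := ((a + 1) / g) *: delta_mx j 0.
exists (K' *m y).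
have WA : y *m A = (a%:M : 'M_1) *m y by rewrite mul_scalar_mx.
have := brauer (B *m K') WA; rewrite char1 mulmxA => ->.
congr (_ * _).
rewrite mulmxA /K' -scalemxAr row_delta -/g scale_scalar_mx -raddfB /= char1.
have -> : a - (a + 1) / g * g = -1 by rewrite divfK //; ring.
by rewrite polyCN polyC1 opprK.
Qed.

Lemma quad_form (p q r t : R) :
  ('X - p%:P) * ('X - t%:P) - (q * r)%:P = 'X * 'X - (p + t)%:P * 'X + (p * t - q * r)%:P.
Proof. rewrite polyCB polyCD !polyCM; ring. Qed.

Lemma step_cplx n m (A : 'M[R]_n) (B : 'M[R]_(n,m)) (a b : R) (u v : 'rV[R]_n) :
  b != 0 -> u *m A = a *: u - b *: v -> v *m A = b *: u + a *: v ->
  (u *m B != 0) \/ (v *m B != 0) ->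
  exists K : 'M[R]_(m,n),
   ('X * 'X - (a + a)%:P * 'X + (a * a + b * b)%:P) * char_poly (A - B *m K)
     = char_poly A * (('X + 1) * ('X + 1)).
Proof.
move=> b0 uA vA uvB.
have [j gj] : exists j, ((u *m B) 0 j != 0) || ((v *m B) 0 j != 0).
  case: uvB => /row_nz [j hj]; exists j; rewrite hj ?orbT //.
set g1 := (u *m B) 0 j in gj; set g2 := (v *m B) 0 j in gj.
have nz : g1 * g1 + g2 * g2 != 0.
  apply/negP => /eqP; move: gj => /orP [] H.
    have h1 : 0 < g1 * g1 by rewrite -expr2 exprn_even_gt0.
    have h2 : 0 <= g2 * g2 by rewrite -expr2 sqr_ge0.
    lra.
  have h1 : 0 < g2 * g2 by rewrite -expr2 exprn_even_gt0.
  have h2 : 0 <= g1 * g1 by rewrite -expr2 sqr_ge0.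
  lra.
pose T := a + a + 2; pose c := (a * a + b * b - 1 - a * T) / b.
pose k1 := (g1 * T + g2 * c) / (g1 * g1 + g2 * g2).
pose k2 := (g2 * T - g1 * c) / (g1 * g1 + g2 * g2).
pose K' : 'M[R]_(m, 1 + 1) := delta_mx j 0 *m row_mx k1%:M k2%:M.
exists (K' *m col_mx u v).
pose Lam : 'M[R]_(1+1) := block_mx a%:M (- b)%:M b%:M a%:M.
have WA : col_mx u v *m A = Lam *m col_mx u v.
  by rewrite mul_col_mx mul_block_col !mul_scalar_mx uA vA scaleNr.
have E := brauer (B *m K') WA; rewrite mulmxA.
have -> : 'X * 'X - (a + a)%:P * 'X + (a * a + b * b)%:P = char_poly Lam.
  by rewrite /Lam char2 quad_form mulNr opprK.
rewrite E; congr (_ * _).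
rewrite /K' !mulmxA !mul_col_mx !row_delta !mul_mx_row -block_mxEv -!scalar_mxM -/g1 -/g2.
rewrite /Lam opp_block_mx add_block_mx -!raddfN -!raddfD /= char2 quad_form.
have -> : a + - (g1 * k1) + (a + - (g2 * k2)) = -2.
  rewrite /k1 /k2 /T; field; exact: nz.
have -> : (a - g1 * k1) * (a - g2 * k2) - - (b + g1 * k2) * (b - g2 * k1) = 1.
  rewrite /k1 /k2 /c /T; field; rewrite nz b0 //.
rewrite polyCN polyC1 (_ : 2%:P = 1 + 1); last by rewrite polyCD polyC1.
ring.
Qed.

Definition stabp (q : {poly R[i]}) := forall z, root q z -> complex.Re z < 0.
Definition cpbh n m (A : 'M[R]_n) (B : 'M[R]_(n,m)) := forall (s : R[i]) (w : 'rV[R[i]]_n),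
  0 <= complex.Re s -> w *m cmx A = s *: w -> w *m cmx B = 0 -> w = 0.

Lemma cpbh_fb n m (A : 'M[R]_n) (B : 'M[R]_(n,m)) K : cpbh A B -> cpbh (A - B *m K) B.
Proof.
move=> H s w hs wA wB; apply: (H s w hs) => //.
by move: wA; rewrite cmxE map_mxB map_mxM mulmxBr mulmxA -cmxE wB mul0mx subr0.
Qed.

Lemma charC n (A : 'M[R]_n) : char_poly (cmx A) = map_poly toC (char_poly A).
Proof. by rewrite cmxE map_char_poly. Qed.

Lemma stabpM p q : stabp p -> stabp q -> stabp (p * q).
Proof. by move=> hp hq z; rewrite rootM => /orP [/hp|/hq]. Qed.

Lemma stabpX1 : stabp ('X + 1).
Proof.
have -> : ('X + 1 : {poly R[i]}) = 'X - (-1)%:P by rewrite polyCN polyC1 opprK.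
move=> z; rewrite root_XsubC => /eqP ->.
by rewrite /= ltrN10.
Qed.

Lemma stabp1 : stabp 1.
Proof. by move=> z; rewrite (negbTE (root1 z)). Qed.

Lemma conj_map (p : {poly R}) : map_poly conjc (map_poly toC p) = map_poly toC p.
Proof.
by rewrite -map_poly_comp; apply: eq_map_poly => x /=; apply/eqP; rewrite eq_complex /= oppr0 !eqxx.
Qed.

Lemma quadC (a b : R) :
  ('X - (a%:C + 'i * b%:C)%:P) * ('X - ((a%:C + 'i * b%:C)^*)%:P) =
  'X * 'X - ((a + a)%:C)%:P * 'X + ((a * a + b * b)%:C)%:P :> {poly R[i]}.
Proof.
have -> : (a%:C + 'i * b%:C)^* = a%:C - 'i * b%:C.
  by apply/eqP; rewrite eq_complex /=; simpc; rewrite /= ?eqxx.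
have hI : ('i%:P * 'i%:P : {poly R[i]}) = -1.
  by rewrite -polyCM -expr2 sqr_i polyCN polyC1.
rewrite !rmorphD !rmorphM /= ?polyCN ?polyCM.
transitivity ('X * 'X - ((a%:C)%:P + (a%:C)%:P) * 'X + (a%:C)%:P * (a%:C)%:P
   - ('i%:P * 'i%:P) * ((b%:C)%:P * (b%:C)%:P) : {poly R[i]}); first by ring.
by rewrite hI; ring.
Qed.

Lemma Re_conj (z : R[i]) : complex.Re (z^*) = complex.Re z.
Proof. by case: z. Qed.
Lemma Im_conj (z : R[i]) : complex.Im (z^*) = - complex.Im z.
Proof. by case: z. Qed.

Lemma step n m (A : 'M[R]_n) (B : 'M[R]_(n,m)) lam u s :
  cpbh A B -> eigenvalue (cmx A) lam -> 0 <= complex.Re lam ->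
  char_poly (cmx A) = u * s -> stabp s ->
  exists K u' s', char_poly (cmx (A - B *m K)) = u' * s' /\ stabp s' /\ (size u' < size u)%N.
Proof.
move=> H eig hre Ech hs.
have rootch : root (char_poly (cmx A)) lam by rewrite -eigenvalue_root_char.
have rootu : root u lam.
  by move: rootch; rewrite Ech rootM => /orP [//|/hs]; rewrite ltNge hre.
have unz : u != 0.
  by move: (monic_neq0 (char_poly_monic (cmx A))); rewrite Ech; apply: contraNneq => ->; rewrite mul0r.
case/eigenvalueP: eig => w wA wnz.
set a := complex.Re lam; set b := complex.Im lam.
have elam : lam = a%:C + 'i * b%:C := complexE lam.
set u0 := map_mx (@complex.Re R) w; set v0 := map_mx (@complex.Im R) w.
have ew : w = cpair u0 v0 := cpair_decomp w.
have := wA; rewrite ew cpair_mulr elam cpair_scale => /cpair_inj [uA vA].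
have uvB : (u0 *m B != 0) \/ (v0 *m B != 0).
  case: (eqVneq (u0 *m B) 0) => [h1|]; last by left.
  case: (eqVneq (v0 *m B) 0) => [h2|]; last by right.
  case/negP: wnz; apply/eqP; apply: (H lam w hre) => //.
  by rewrite ew cpair_mulr h1 h2 cpair0.
case: (eqVneq b 0) => [b0|bnz].
  have lamE : lam = a%:C by rewrite elam b0 rmorph0 mulr0 addr0.
  have [y [yA yB]] : exists y : 'rV[R]_n, y *m A = a *: y /\ y *m B != 0.
    case: uvB => h; [exists u0 | exists v0]; split => //;
      [rewrite uA | rewrite vA]; rewrite b0 scale0r ?subr0 ?add0r //.
  have [K EK] := step_real yA yB.
  have EKC : ('X - lam%:P) * char_poly (cmx (A - B *m K)) = char_poly (cmx A) * ('X + 1).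
    have := congr1 (map_poly toC) EK; rewrite !rmorphM /= -!charC map_polyXsubC.
    by rewrite rmorphD /= map_polyX rmorph1 lamE.
  case/factor_theorem: rootu => u1 eu.
  have u1nz : u1 != 0 by move: unz; rewrite eu; apply: contraNneq => ->; rewrite mul0r.
  exists K, u1, (s * ('X + 1)); split; [|split].
  - have xnz : 'X - lam%:P != 0 by rewrite polyXsubC_eq0.
    apply: (mulfI xnz); by rewrite EKC Ech eu; ring.
  - exact: stabpM hs stabpX1.
  - by rewrite eu size_Mmonic ?monicXsubC // size_XsubC addn2 ltnSn.
have [K EK] := step_cplx bnz uA vA uvB.
have EKC : (('X - lam%:P) * ('X - (lam^*)%:P)) * char_poly (cmx (A - B *m K))
     = char_poly (cmx A) * (('X + 1) * ('X + 1)).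
  have := congr1 (map_poly toC) EK; rewrite !rmorphM /= -!charC.
  have -> : map_poly toC ('X + 1) = 'X + 1 by rewrite rmorphD /= map_polyX rmorph1.
  move=> <-.
  rewrite elam quadC; congr (_ * _).
  by rewrite !rmorphD /= rmorphN !rmorphM /= map_polyX !map_polyC /= !rmorphD /= !map_polyC.
have rootc : root (char_poly (cmx A)) lam^*.
  by rewrite -complex_root_conj charC conj_map -charC.
have rootuc : root u lam^*.
  by move: rootc; rewrite Ech rootM => /orP [//|/hs]; rewrite Re_conj ltNge hre.
have neq : lam^* != lam.
  apply/negP => /eqP /(congr1 (@complex.Im R)); rewrite Im_conj -/b => /eqP.
  by rewrite eq_sym -subr_eq0 opprK -mulr2n mulrn_eq0 /= (negbTE bnz).
case/factor_theorem: rootu => u1 eu.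
have : root u1 lam^* by move: rootuc; rewrite eu rootM root_XsubC (negbTE neq) orbF.
case/factor_theorem => u2 eu1.
have u2nz : u2 != 0 by move: unz; rewrite eu eu1; apply: contraNneq => ->; rewrite !mul0r.
exists K, u2, (s * (('X + 1) * ('X + 1))); split; [|split].
- have xnz : ('X - lam%:P) * ('X - (lam^*)%:P) != 0.
    by rewrite mulf_neq0 // polyXsubC_eq0.
  apply: (mulfI xnz); by rewrite EKC Ech eu eu1; ring.
- exact: stabpM hs (stabpM stabpX1 stabpX1).
- rewrite eu eu1 size_Mmonic ?monicXsubC ?mulf_neq0 ?polyXsubC_eq0 //.
  by rewrite size_Mmonic ?monicXsubC // !size_XsubC !addn2 /= ltnW.
Qed.

Lemma stab_ind N : forall n m (A : 'M[R]_n) (B : 'M[R]_(n,m)) u s,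
  cpbh A B -> char_poly (cmx A) = u * s -> stabp s -> (size u <= N)%N ->
  exists K, hurwitz (A - B *m K).
Proof.
elim: N => [|N IH] n m A B u s H Ech hs hsz.
  move: hsz; rewrite leqn0 size_poly_eq0 => /eqP u0.
  by move: (monic_neq0 (char_poly_monic (cmx A))); rewrite Ech u0 mul0r eqxx.
case: (Classical_Prop.classic (exists lam, eigenvalue (cmx A) lam /\ 0 <= complex.Re lam)).
  case=> lam [eig hre].
  have [K1 [u' [s' [E1 [hs' hsz']]]]] := step H eig hre Ech hs.
  have [K2 HK] := IH _ _ _ _ _ _ (cpbh_fb (K:=K1) H) E1 hs' (leq_trans hsz' hsz).
  exists (K1 + K2); by rewrite mulmxDr opprD addrA.
move=> nex; exists 0; rewrite mulmx0 subr0 => z ez.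
by rewrite ltNge; apply/negP => hz; apply: nex; exists z.
Qed.

Theorem stabilize n m (A : 'M[R]_n) (B : 'M[R]_(n,m)) :
  cpbh A B -> exists K, hurwitz (A - B *m K).
Proof.
move=> H; apply: (@stab_ind (size (char_poly (cmx A))) _ _ A B _ 1 H) => //.
  by rewrite mulr1.
exact: stabp1.
Qed.

Lemma cmx_tr m n (M : 'M[R]_(m,n)) : cmx M^T = (cmx M)^T.
Proof. by rewrite !cmxE map_trmx. Qed.

Lemma hurwitz_tr n (M : 'M[R]_n) : hurwitz M^T -> hurwitz M.
Proof. by move=> H s e; apply: H; rewrite cmx_tr eigenvalue_tr. Qed.

Definition opbh n p (A : 'M[R]_n) (C : 'M[R]_(p,n)) := forall (s : R[i]) (x : 'cV[R[i]]_n),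
  0 <= complex.Re s -> cmx A *m x = s *: x -> cmx C *m x = 0 -> x = 0.

Lemma observer n p (A : 'M[R]_n) (C : 'M[R]_(p,n)) :
  opbh A C -> exists L : 'M[R]_(n,p), hurwitz (A - L *m C).
Proof.
move=> H.
have H' : cpbh A^T C^T.
  move=> s w hs wA wC; apply: trmx_inj; rewrite trmx0; apply: (H s) => //.
    by rewrite -[cmx A]trmxK -cmx_tr -trmx_mul wA linearZ.
  by rewrite -[cmx C]trmxK -cmx_tr -trmx_mul wC trmx0.
case: (stabilize H') => K HK; exists K^T; apply: hurwitz_tr.
by rewrite linearB /= trmx_mul trmxK.
Qed.

Lemma cM_col p r (M : 'M[R]_(p + r)) (z1 : 'cV[R[i]]_p) (z2 : 'cV[R[i]]_r) :
  cmx M *m col_mx z1 z2 = col_mx (cmx (ulsubmx M) *m z1 + cmx (ursubmx M) *m z2)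
                                 (cmx (dlsubmx M) *m z1 + cmx (drsubmx M) *m z2).
Proof. by rewrite -{1}[M]submxK cmxE map_block_mx mul_block_col. Qed.

Lemma cmx_row10 p r : cmx (row_mx (1%:M : 'M[R]_p) (0 : 'M[R]_(p, r))) = row_mx 1%:M 0.
Proof. by rewrite cmxE map_row_mx map_mx1 map_mx0. Qed.

Lemma fullcol_inj n q (P : 'M[R[i]]_(q, n)) (x : 'cV_n) : \rank P = n -> P *m x = 0 -> x = 0.
Proof.
move=> rk Px; apply: trmx_inj; rewrite trmx0; apply/eqP.
have fr : row_free P^T by rewrite /row_free mxrank_tr rk.
by rewrite -(mulmx_free_eq0 _ fr) -trmx_mul Px trmx0.
Qed.

Lemma notfull_ker n q (P : 'M[R[i]]_(q, n)) : \rank P != n -> exists2 x : 'cV_n, x != 0 & P *m x = 0.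
Proof.
move=> rk; have nfr : ~~ row_free P^T by rewrite /row_free mxrank_tr.
exists (nz_row (kermx P^T))^T.
  by rewrite trmx_eq0 nz_row_eq0 kermx_eq0.
apply: trmx_inj; rewrite trmx_mul trmxK trmx0; apply/sub_kermxP.
exact: nz_row_sub.
Qed.

Lemma cmx_inv n (T : 'M[R]_n) : cmx (invmx T) = invmx (cmx T).
Proof. by rewrite !cmxE map_invmx. Qed.

Lemma good_red p r (A : 'M[R]_(p + r)) (C : 'M[R]_(p, p + r)) (T : 'M[R]_(p + r)) :
  T \in unitmx -> C *m T = row_mx 1%:M 0 -> detectable A C ->
  opbh (drsubmx (invmx T *m A *m T)) (ursubmx (invmx T *m A *m T)).
Proof.
move=> Tu CT det s z2 hs A22z A12z.
set M := invmx T *m A *m T in A22z A12z.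
have cTu : cmx T \in unitmx by rewrite cmxE map_unitmx.
have cME : cmx T *m cmx M = cmx A *m cmx T.
  by rewrite /M !cmxM cmx_inv !mulmxA mulmxV // mul1mx.
pose x := cmx T *m col_mx 0 z2.
have Mz : cmx M *m col_mx 0 z2 = s *: col_mx 0 z2.
  by rewrite cM_col !mulmx0 !add0r A12z A22z scale_col_mx scaler0.
have Ax : cmx A *m x = s *: x by rewrite /x mulmxA -cME -mulmxA Mz scalemxAr.
have Cx : cmx C *m x = 0.
  by rewrite /x mulmxA -cmxM CT cmx_row10 mul_row_col mul0mx mulmx0 addr0.
have : x = 0.
  apply: (fullcol_inj (det s hs)).
  by rewrite mul_col_mx Cx mulmxBl mul_scalar_mx Ax subrr col_mx0.
move=> /(congr1 (mulmx (invmx (cmx T)))); rewrite /x mulKmx // mulmx0.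
by move/eqP; rewrite col_mx_eq0 => /andP [_ /eqP].
Qed.

Lemma bad_red p r (A : 'M[R]_(p + r)) (C : 'M[R]_(p, p + r)) (T : 'M[R]_(p + r)) s :
  T \in unitmx -> C *m T = row_mx 1%:M 0 ->
  \rank (col_mx (cmx C) (s%:M - cmx A)) != (p + r)%N ->
  exists2 z2 : 'cV[R[i]]_r, z2 != 0 &
    cmx (ursubmx (invmx T *m A *m T)) *m z2 = 0 /\
    cmx (drsubmx (invmx T *m A *m T)) *m z2 = s *: z2.
Proof.
move=> Tu CT rk.
set M := invmx T *m A *m T.
have cTu : cmx T \in unitmx by rewrite cmxE map_unitmx.
have [x xnz Px] := notfull_ker rk.
move: Px; rewrite mul_col_mx => /eqP; rewrite col_mx_eq0 => /andP [/eqP Cx].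
rewrite mulmxBl mul_scalar_mx subr_eq0 => /eqP Ax.
pose z := invmx (cmx T) *m x.
have xz : x = cmx T *m z by rewrite /z mulKVmx.
have Mz : cmx M *m z = s *: z.
  by rewrite /M !cmxM cmx_inv -!mulmxA -xz -Ax scalemxAr.
have uz : usubmx z = 0.
  by move: Cx; rewrite xz mulmxA -cmxM CT cmx_row10 -{1}[z]vsubmxK mul_row_col mul1mx mul0mx addr0.
exists (dsubmx z).
  apply: contraNneq xnz => dz; rewrite xz -[z]vsubmxK uz dz col_mx0 mulmx0 //.
have ez : z = col_mx 0 (dsubmx z) by rewrite -{1}[z]vsubmxK uz.
move: Mz; set z2 := dsubmx z; rewrite ez cM_col !mulmx0 !add0r scale_col_mx scaler0.
by move/eq_col_mx.
Qed.

Lemma cpair_mull m n l (Y : 'M[R]_(m,n)) (P Q : 'M[R]_(n,l)) :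
  cmx Y *m cpair P Q = cpair (Y *m P) (Y *m Q).
Proof. by rewrite /cpair mulmxDr -scalemxAr !cmxM. Qed.

Lemma cmx_eq0 m n (P : 'M[R]_(m,n)) : cmx P = 0 -> P = 0.
Proof. by move=> /eqP; rewrite cmxE map_mx_eq0 => /eqP. Qed.

Lemma Fexists r p k (A22 : 'M[R]_r) (A12 : 'M[R]_(p, r)) :
  (k <= \rank A12)%N -> opbh A22 A12 ->
  exists F : 'M[R]_(r, k), forall (a1 : 'cV[R]_r) (a2 : 'cV[R]_k),
    A12 *m a1 = 0 -> A22 *m a1 + F *m a2 = 0 -> a1 = 0 /\ a2 = 0.
Proof.
move=> hk H.
have inj : forall y : 'cV[R]_r, A12 *m y = 0 -> A22 *m y = 0 -> y = 0.
  move=> y h1 h2; apply: cmx_eq0; apply: (H 0) => //.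
    by rewrite -cmxM h2 scale0r cmxE map_mx0.
  by rewrite -cmxM h1 cmxE map_mx0.
pose Wsp := kermx A12^T *m A22^T.
pose Co := (Wsp^C)%MS.
have rkCo : (k <= \rank Co)%N.
  rewrite /Co mxrank_compl.
  have : (\rank Wsp <= r - \rank A12)%N.
    by rewrite -(mxrank_tr A12) -mxrank_ker mxrankM_maxl.
  have : (\rank A12 <= r)%N by apply: rank_leq_col.
  lia.
pose FT : 'M[R]_(k, r) := pid_mx k *m row_base Co.
have frFT : row_free FT.
  by rewrite /row_free /FT mxrankMfree ?row_base_free // rank_pid_mx.
have FTCo : (FT <= Co)%MS.
  by rewrite /FT (submx_trans (submxMl _ _)) // eq_row_base.
exists FT^T => a1 a2 h1 h2.
have z0 : a2^T *m FT = 0.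
  apply/eqP; rewrite -submx0 -(capmx_compl Wsp) sub_capmx; apply/andP; split.
    have -> : a2^T *m FT = - (a1^T *m A22^T).
      apply/eqP; rewrite -addr_eq0 addrC -[FT]trmxK -!trmx_mul -linearD /=.
      by rewrite h2 trmx0.
    rewrite eqmx_opp /Wsp submxMr //; apply/sub_kermxP.
    by rewrite -trmx_mul h1 trmx0.
  exact: submx_trans (submxMl _ _) FTCo.
have a20 : a2 = 0.
  by apply: trmx_inj; rewrite trmx0; apply/eqP; rewrite -(mulmx_free_eq0 _ frFT) z0.
split => //; apply: inj => //.
by move: h2; rewrite a20 mulmx0 addr0.
Qed.

Lemma cpairD m n (P Q P' Q' : 'M[R]_(m,n)) : cpair P Q + cpair P' Q' = cpair (P + P') (Q + Q').
Proof. by rewrite /cpair !cmxE !map_mxD scalerDr addrACA. Qed.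

Lemma aug_opbh r p k (A22 : 'M[R]_r) (A12 : 'M[R]_(p, r)) (F : 'M[R]_(r, k)) :
  opbh A22 A12 ->
  (forall (a1 : 'cV[R]_r) (a2 : 'cV[R]_k),
    A12 *m a1 = 0 -> A22 *m a1 + F *m a2 = 0 -> a1 = 0 /\ a2 = 0) ->
  opbh (block_mx A22 F 0 0 : 'M_(r + k)) (row_mx A12 (0 : 'M_(p, k))).
Proof.
move=> H Hf s x hs Ax Cx.
rewrite -[x]vsubmxK in Ax Cx *; set x1 := usubmx x in Ax Cx *; set x2 := dsubmx x in Ax Cx *.
move: Cx; rewrite cmxE map_row_mx map_mx0 mul_row_col mul0mx addr0 -cmxE => h12.
move: Ax; rewrite cmxE map_block_mx !map_mx0 mul_block_col !mul0mx addr0 -!cmxE scale_col_mx.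
move/eq_col_mx => [e1 /esym e2].
case: (eqVneq s 0) => [s0|snz].
  move: e1 h12; rewrite s0 scale0r (cpair_decomp x1) (cpair_decomp x2) !cpair_mull cpairD.
  move=> /cpair_eq0 [h1 h2] /cpair_eq0 [h3 h4].
  have [-> ->] := Hf _ _ h3 h1; have [-> ->] := Hf _ _ h4 h2.
  by rewrite !cpair0 col_mx0.
have x20 : x2 = 0 by move/eqP: e2; rewrite scalemx_eq0 (negbTE snz) => /eqP.
move: e1; rewrite x20 mulmx0 addr0 => e1.
by rewrite (H s x1 hs e1 h12) col_mx0.
Qed.

Lemma pi_cmx_col r p k (A22 : 'M[R]_r) (A12 : 'M[R]_(p, r)) L F G (z2 : 'cV[R[i]]_r) s :
  cmx A12 *m z2 = 0 -> cmx A22 *m z2 = s *: z2 ->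
  cmx (pi_obs_matrix A22 A12 L F G : 'M_(r + k)) *m col_mx z2 (0 : 'cV_k) = s *: col_mx z2 0.
Proof.
move=> h12 h22.
rewrite /pi_obs_matrix cmxE map_block_mx mul_block_col !map_mx0 !mulmx0 !addr0.
rewrite map_mxB map_mxN !map_mxM -!cmxE mulmxBl mulNmx -!mulmxA h12 h22 mulmx0 oppr0 addr0 mulmx0 oppr0.
by rewrite scale_col_mx scaler0.
Qed.

End C.

Unset Implicit Arguments.
Local Close Scope complex_scope.
Local Open Scope ring_scope.

Theorem theorem2 (R : rcfType) (p r m k : nat)
  (A : 'M[R]_(p + r)) (B : 'M[R]_(p + r, m)) (C : 'M[R]_(p, p + r))
  (T : 'M[R]_(p + r)) :
  \rank C = p ->
  T \in unitmx ->
  C *m T = row_mx 1%:M 0 ->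
  let M := invmx T *m A *m T in
  let A12 := ursubmx M in
  let A22 := drsubmx M in
  (k <= \rank A12)%N ->
  (exists (L : 'M[R]_(r, p)) (F : 'M[R]_(r, k)) (G : 'M[R]_(k, p)),
      \rank G = k /\ is_reduced_PI_observer A22 A12 L F G)
  <-> detectable A C.
Proof.
move=> rC Tu CT M A12 A22 hk; split.
  case=> L [F [G [rG Hur]]] s hs; apply/eqP.
  case: (eqVneq (\rank (col_mx (cmx C) (s%:M - cmx A))) (p + r)%N) => // nr.
  exfalso.
  have [z2 z2nz [h12 h22]] := bad_red Tu CT nr.
  have E := pi_cmx_col L F G h12 h22.
  have eig : eigenvalue (cmx (pi_obs_matrix A22 A12 L F G)) s.
    rewrite -eigenvalue_tr; apply/eigenvalueP; exists (col_mx z2 (0 : 'cV_k))^T.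
      by rewrite -trmx_mul E linearZ.
    by rewrite trmx_eq0 col_mx_eq0 negb_and z2nz.
  by move: (Hur s eig); rewrite ltNge hs.
move=> det.
have H22 : opbh A22 A12 := good_red Tu CT det.
have [F HF] := Fexists hk H22.
have [Lb HL] := observer (aug_opbh H22 HF).
have E : pi_obs_matrix A22 A12 (usubmx Lb) F (dsubmx Lb) =
         block_mx A22 F 0 0 - Lb *m row_mx A12 0.
  rewrite -{3}[Lb]vsubmxK mul_col_row !mulmx0 /pi_obs_matrix opp_block_mx add_block_mx.
  by rewrite !oppr0 !addr0 !add0r.
have Hur : is_reduced_PI_observer A22 A12 (usubmx Lb) F (dsubmx Lb).
  by rewrite /is_reduced_PI_observer E.
exists (usubmx Lb), F, (dsubmx Lb); split => //.
case: (eqVneq (\rank (dsubmx Lb)) k) => // nk; exfalso.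
have nfr : ~~ row_free (dsubmx Lb) by rewrite /row_free.
pose y := nz_row (kermx (dsubmx Lb)).
have ynz : y != 0 by rewrite nz_row_eq0 kermx_eq0.
have yG : y *m dsubmx Lb = 0 by apply/sub_kermxP; exact: nz_row_sub.
have eig : eigenvalue (pi_obs_matrix A22 A12 (usubmx Lb) F (dsubmx Lb)) 0.
  apply/eigenvalueP; exists (row_mx (0 : 'rV_r) y).
    rewrite /pi_obs_matrix mul_row_block !mul0mx !mulmx0 !add0r mulmxN mulmxA yG mul0mx oppr0.
    by rewrite row_mx0 scale0r.
  by apply: contraNneq ynz => h; move: h; rewrite -row_mx0 => /eq_row_mx [_ ->].
have : eigenvalue (cmx (pi_obs_matrix A22 A12 (usubmx Lb) F (dsubmx Lb))) 0.
  by rewrite cmxE -(rmorph0 (real_complex R)) (eigenvalue_map (real_complex R)); exact: eig.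
by move/Hur; rewrite /= ltxx.
Qed.
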